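(* Let $G$ be an infinite vertex-transitive graph of finite degree, let $K\subset V(G)$ be finite, let $y\in K$, and let $\sigma=(\tilde\eta^o_0,\tilde\eta^w_0)$ be an unstable particle configuration. Then for the ghost-pair stabilization of $K$ started from $\sigma$, \[ \tilde E_{K,\sigma}\bigl(\tilde m(y)\bigr)=\sum_{x\in K}\bigl(\tilde\eta^o_0(x)\wedge\tilde\eta^w_0(x)\bigr)\,G_K(x,y). \]
   Context: A particle configuration $(\eta^o,\eta^w)\in\mathbb{N}^{V(G)}\times\mathbb{N}^{V(G)}$ gives the numbers of oils and waters at each vertex; $x$ is stable if $\eta^o(x)\wedge\eta^w(x)=0$, and $\eta^o(x)\wedge\eta^w(x)$ is the number of (oil-water) pairs at $x$; $x$ is a hole if $\eta^o(x)=\eta^w(x)$. Ghost-pair stabilization of $K$: states are triples $(\tilde\eta^o,\tilde\eta^w,\tilde\eta^g)$, the last coordinate counting auxiliary particles called ghosts. Start with oils and waters as in $\sigma$ and no ghosts. At each step $t=0,1,2,\dots$: (i) either one ghost located at a vertex of $K$ makes one simple random walk step, or one oil-water pair at a vertex $b\in K$ (i.e. $b$ has at least one oil and one water) moves, meaning one oil and one water at $b$ each independently jump to a uniformly chosen neighbor of $b$; the choice of which ghost or pair moves is arbitrary (may depend on the past); (ii) if in (i) a water jumped into a vertex $x\in K$ which was a hole just before this step and after the step $x$ has exactly one more water than oils, a new ghost is created at $x$. Ghosts do not interact with oils, waters, or each other. The procedure stops at the first time $T$ at which $K$ is stable for oils and waters and no ghost is in $K$ ($T$ is a.s. finite). $\tilde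 m(y)$ is the total number of times that a ghost or an oil-water pair jumps from $y$, and $\tilde P_{K,\sigma},\tilde E_{K,\sigma}$ denote the law and expectation of this procedure. $G_K(x,y)=E_x\bigl[\sum_{t=0}^{\tau_{K^c}}\mathbf{1}\{X(t)=y\}\bigr]$, where $X$ is simple random walk on $G$ started at $x$ and $\tau_{K^c}=\inf\{t\ge0:X(t)\notin K\}$. *)

(* Defs.v *)
From mathcomp Require Import all_boot all_order all_algebra.
From mathcomp Require Import all_classical all_reals all_analysis.
Set Implicit Arguments. Unset Strict Implicit. Unset Printing Implicit Defensive.
Import Order.TTheory GRing.Theory Num.Theory.
Local Open Scope ring_scope.

Section Defs.
Variable V : eqType.
(* A locally finite simple graph is given by its (duplicate-free) neighbour lists. *)
Variable adj : V -> seq V.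

Definition graph_simple : Prop :=
  (forall v, uniq (adj v)) /\ (forall v, v \notin adj v) /\
  (forall u v, (v \in adj u) = (u \in adj v)).

Definition graph_connected : Prop :=
  forall x y : V, exists p : seq V,
    path (fun a b => b \in adj a) x p /\ last x p = y.

Definition graph_infinite : Prop := ~ exists s : seq V, forall v : V, v \in s.

Definition vertex_transitive : Prop :=
  forall x y : V, exists f : V -> V,
    bijective f /\ (forall u v, (v \in adj u) = (f v \in adj (f u))) /\ f x = y.

Definition deg (v : V) : nat := size (adj v).

(* choice made at a step: move a ghost from v, or move a pair from v *)
Inductive gpchoice := Ghost of V | Pair of V.
(* realized step: GStep from to ; PStep from oil_to water_to *)
Inductive gpstep := GStep of V & V | PStep of V & V & V.

Definition origin (c : gpchoice) : V := match c with Ghost v => v | Pair v => v end.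

(* state: (oils, waters, ghosts) *)
Definition pstate := ((V -> nat) * (V -> nat) * (V -> nat))%type.

Definition upd (f : V -> nat) (v : V) (g : nat -> nat) : V -> nat :=
  fun x => if x == v then g (f x) else f x.

Variable K : seq V.

Definition apply_step (st : pstate) (x : gpstep) : pstate :=
  let: (eo, ew, eg) := st in
  match x with
  | GStep a b => (eo, ew, upd (upd eg a predn) b succn)
  | PStep b u w =>
      let eo1 := upd (upd eo b predn) u succn in
      let ew1 := upd (upd ew b predn) w succn in
      let newghost :=
        [&& w \in K, eo w == ew w & ew1 w == (eo1 w).+1] in
      (eo1, ew1, if newghost then upd eg w succn else eg)
  end.

Variables (so sw : V -> nat).

(* histories are stored newest step first *)
Definition state_of (h : seq gpstep) : pstate :=
  foldr (fun x st => apply_step st x) (so, sw, fun _ => 0%N) h.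

Definition terminal (st : pstate) : bool :=
  let: (eo, ew, eg) := st in
  all (fun x => (minn (eo x) (ew x) == 0%N) && (eg x == 0%N)) K.

Definition valid_choice (st : pstate) (c : gpchoice) : bool :=
  let: (eo, ew, eg) := st in
  match c with
  | Ghost v => (v \in K) && (0 < eg v)%N
  | Pair v => [&& v \in K, (0 < eo v)%N & (0 < ew v)%N]
  end.

Definition options (c : gpchoice) : seq gpstep :=
  match c with
  | Ghost v => [seq GStep v u | u <- adj v]
  | Pair v => [seq PStep v u w | u <- adj v, w <- adj v]
  end.

Variable strat : seq gpstep -> gpchoice.

Fixpoint hist (n : nat) : seq (seq gpstep) :=
  match n with
  | 0 => [:: [::]]
  | n'.+1 => flatten [seq [seq x :: h | x <- options (strat h)]
                     | h <- hist n' & ~~ terminal (state_of h)]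
  end.

Definition valid_strategy : Prop :=
  forall n, all (fun h => terminal (state_of h) || valid_choice (state_of h) (strat h))
                (hist n).

Variable R : realType.

Definition step_weight (x : gpstep) : R :=
  match x with
  | GStep a _ => (deg a)%:R^-1
  | PStep a _ _ => ((deg a)%:R ^+ 2)^-1
  end.

Definition hist_prob (h : seq gpstep) : R := \prod_(x <- h) step_weight x.

(* tilde E (tilde m(y)) = sum_t P(t < T and the move at time t is from y) *)
Definition expected_jumps_from (y : V) : \bar R :=
  (\sum_(0 <= n <oo)
     (\sum_(h <- hist n | ~~ terminal (state_of h) && (origin (strat h) == y))
        hist_prob h)%:E)%E.

(* q n x y = P_x(X(n) = y, n <= tau_{K^c}) for simple random walk X *)
Fixpoint killed_prob (n : nat) (x y : V) : R :=
  match n with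
  | 0 => (x == y)%:R
  | n'.+1 => if x \in K then (deg x)%:R^-1 * \sum_(u <- adj x) killed_prob n' u y
             else 0
  end.

(* G_K(x,y) = E_x[ sum_{t=0}^{tau} 1{X(t)=y} ] = sum_t P_x(X(t)=y, t <= tau) *)
Definition greenK (x y : V) : \bar R :=
  (\sum_(0 <= n <oo) (killed_prob n x y)%:E)%E.

End Defs.

(* Main.v *)
Require Import Defs.
From mathcomp Require Import all_boot all_order all_algebra.
From mathcomp Require Import all_classical all_reals all_analysis.
From mathcomp Require Import ring lra zify.
Import Order.TTheory GRing.Theory Num.Theory.
Local Open Scope ring_scope.


Section Green.
Variables (R : realType) (V : eqType) (adj : V -> seq V) (K : seq V).

Definition Pk (f : V -> R) (x : V) : R :=
  if x \in K then (deg adj x)%:R^-1 * \sum_(u <- adj x) f u else 0.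

Lemma killedE n x y :
  killed_prob adj K R n x y = iter n Pk (fun z => (z == y)%:R) x.
Proof.
elim: n x => [|n IH] x //=.
rewrite /Pk; case: ifP => // _; congr (_ * _); apply: eq_bigr => u _; exact: IH.
Qed.

Lemma iterPk_ge0 n f : (forall x, 0 <= f x) -> forall x, 0 <= iter n Pk f x.
Proof.
move=> f0; elim: n => [|n IH] x //=.
rewrite /Pk; case: ifP => // _; apply: mulr_ge0; first by rewrite invr_ge0.
by apply: sumr_ge0 => u _.
Qed.

Lemma iterPk_le n f g : (forall x, f x <= g x) ->
  forall x, iter n Pk f x <= iter n Pk g x.
Proof.
move=> fg; elim: n => [|n IH] x //=.
rewrite /Pk; case: ifP => // _; apply: ler_wpM2l; first by rewrite invr_ge0.
by apply: ler_sum => u _.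
Qed.

Lemma iterPkZ n c f x : iter n Pk (fun z => c * f z) x = c * iter n Pk f x.
Proof.
elim: n x => [|n IH] x //=.
rewrite /Pk; case: ifP => _; last by rewrite mulr0.
rewrite mulrCA; congr (_ * _); rewrite mulr_sumr; apply: eq_bigr => u _; exact: IH.
Qed.

Lemma iterPk_sum (I : Type) (r : seq I) n (F : I -> V -> R) x :
  iter n Pk (fun z => \sum_(i <- r) F i z) x = \sum_(i <- r) iter n Pk (F i) x.
Proof.
elim: n x => [|n IH] x //=.
rewrite /Pk; case: ifP => _; last by rewrite big1.
rewrite (eq_bigr (fun u => \sum_(i <- r) iter n Pk (F i) u)); last by move=> u _; exact: IH.
rewrite exchange_big mulr_sumr; apply: eq_bigr => i _ //.
Qed.

Definition one (x : V) : R := (x \in K)%:R.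
Definition sK n := iter n Pk one.

Lemma sK_ge0 n x : 0 <= sK n x.
Proof. by apply: iterPk_ge0 => z; rewrite /one ler0n. Qed.

Lemma Pk_le1 f : (forall x, f x <= 1) -> forall x, Pk f x <= 1.
Proof.
move=> f1 x; rewrite /Pk; case: ifP => // _.
have H : \sum_(u <- adj x) f u <= (deg adj x)%:R.
  rewrite /deg -sum1_size natr_sum; apply: ler_sum => u _; exact: f1.
have [d0|dpos] := eqVneq (deg adj x) 0%N.
  by rewrite d0 invr0 mul0r.
have dp : (0 : R) < (deg adj x)%:R by rewrite ltr0n lt0n.
by rewrite ler_pdivrMl // mulr1.
Qed.

Lemma sK_le1 n x : sK n x <= 1.
Proof.
elim: n x => [|n IH] x; first by rewrite /sK /= /one; case: (x \in K).
rewrite /sK iterS; exact: (@Pk_le1 (iter n Pk one) IH x).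
Qed.

Lemma sK_off n x : x \notin K -> sK n x = 0.
Proof.
by case: n => [|n] xK; rewrite /sK ?iterS /= /Pk /one (negbTE xK).
Qed.

Lemma sK_decr n x : sK n.+1 x <= sK n x.
Proof.
rewrite /sK iterSr; apply: iterPk_le => z.
case zK: (z \in K); last by rewrite /Pk /one zK.
rewrite {2}/one zK; apply: Pk_le1 => u; rewrite /one; by case: (u \in K).
Qed.

Lemma sK_mono m n x : (m <= n)%N -> sK n x <= sK m x.
Proof.
move=> /subnK <-; elim: (n - m)%N => [|k IH] //.
by rewrite addSn; apply: le_trans (sK_decr _ _) IH.
Qed.

Lemma sum_le_size (r : seq V) (f : V -> R) v d :
  v \in r -> (forall u, f u <= 1) -> f v <= 1 - d ->
  \sum_(u <- r) f u <= (size r)%:R - d.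
Proof.
elim: r => [|a r IH] //= vin f1 fv.
rewrite big_cons -addn1 natrD.
rewrite in_cons in vin; case/orP: vin => [/eqP <-|vr].
  rewrite -addrA addrC; apply: lerD => //.
  rewrite -sum1_size natr_sum; apply: ler_sum => u _; exact: f1.
rewrite [X in _ <= X](_ : _ = 1 + ((size r)%:R - d)); last by lra.
by apply: lerD => //; exact: IH.
Qed.

Lemma exit_bound (p : seq V) x :
  path (fun a b => b \in adj a) x p -> last x p \notin K ->
  exists j (d : R), 0 < d /\ sK j x <= 1 - d.
Proof.
elim: p x => [|v p IH] x /=.
  by move=> _ xK; exists 0%N, 1; rewrite sK_off // subrr ltr01.
case/andP=> vx pth lK.
case xK: (x \in K); last first.
  by exists 0%N, 1; rewrite sK_off ?xK // subrr ltr01.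
have [j [d [d0 hj]]] := IH v pth lK.
have dpos : (0 < deg adj x)%N by rewrite /deg; case: (adj x) vx.
have dp : (0 : R) < (deg adj x)%:R by rewrite ltr0n.
exists j.+1, (d / (deg adj x)%:R); split; first by rewrite divr_gt0.
rewrite /sK iterS /Pk xK.
have := @sum_le_size (adj x) (sK j) v d vx (sK_le1 j) hj.
rewrite -/(deg adj x) => H.
rewrite -(ler_pM2l dp) mulrA mulfV ?gt_eqF // mul1r mulrBr mulr1 mulrCA mulfV ?gt_eqF //.
by rewrite mulr1.
Qed.

Lemma exists_out (Hinf : graph_infinite V) (r : seq V) : exists v, v \notin r.
Proof.
apply: contrapT => H; apply: Hinf; exists r => v.
apply: contrapT => /negP hv; apply: H; by exists v.
Qed.

Lemma uniform_exit (Hconn : graph_connected adj) (Hinf : graph_infinite V) (r : seq V) :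
  exists L (d : R), [/\ 0 < d, (0 < L)%N & forall x, x \in r -> sK L x <= 1 - d].
Proof.
elim: r => [|a r [L [d [d0 L0 IH]]]].
  by exists 1%N, 1; split => //; rewrite ltr01.
have [v vK] := exists_out Hinf K.
have [p [pth lst]] := Hconn a v.
have := @exit_bound p a pth; rewrite lst => /(_ vK) [j [e [e0 he]]].
exists (maxn L j), (Num.min d e); split.
- by rewrite lt_min d0 e0.
- by rewrite (leq_trans L0) // leq_maxl.
- move=> x; rewrite in_cons => /orP [/eqP ->|xr].
    apply: le_trans (sK_mono _ _ a (leq_maxr L j)) _.
    apply: (le_trans he); rewrite lerB // ge_min lexx orbT //.
  apply: le_trans (sK_mono _ _ x (leq_maxl L j)) _.
  apply: (le_trans (IH x xr)); rewrite lerB // ge_min lexx //.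
Qed.

Definition Sg N x := \sum_(0 <= n < N) sK n x.

Lemma Sg_ge0 N x : 0 <= Sg N x.
Proof. by apply: sumr_ge0 => n _; exact: sK_ge0. Qed.

Lemma Sg_mono N M x : (N <= M)%N -> Sg N x <= Sg M x.
Proof.
move=> NM; rewrite /Sg (big_cat_nat (leq0n N) NM) /= lerDl.
by apply: sumr_ge0 => n _; exact: sK_ge0.
Qed.

Lemma Sg_off N x : x \notin K -> Sg N x = 0.
Proof. by move=> xK; rewrite /Sg big1 // => n _; rewrite sK_off. Qed.

Lemma Sg_bound L (d : R) : 0 < d -> (0 < L)%N ->
  (forall x, x \in K -> sK L x <= 1 - d) ->
  forall N x, Sg N x <= L%:R / d.
Proof.
move=> d0 L0 HL.
have Hk : forall k x, Sg (k * L) x <= L%:R / d.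
  elim=> [|k IH] x.
    by rewrite mul0n /Sg big_geq // divr_ge0 // ?ler0n // ltW.
  case xK: (x \in K); last first.
    by rewrite Sg_off ?xK // divr_ge0 // ?ler0n // ltW.
  rewrite mulSn /Sg (big_cat_nat (leq0n L) (leq_addr _ _)) /=.
  rewrite (big_addn 0 (L + k * L) L) addKn.
  have E : \sum_(0 <= i < k * L) sK (i + L) x =
           iter L Pk (fun z => \sum_(0 <= i < k * L) sK i z) x.
    rewrite iterPk_sum; apply: eq_bigr => i _.
    by rewrite /sK addnC iterD.
  rewrite E.
  have H1 : iter L Pk (fun z => \sum_(0 <= i < k * L) sK i z) x <=
            iter L Pk (fun z => (L%:R / d) * one z) x.
    apply: iterPk_le => z; rewrite /one; case zK: (z \in K).
      by rewrite mulr1; exact: IH.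
    by rewrite mulr0 big1 // => i _; rewrite sK_off ?zK.
  rewrite iterPkZ -/(sK L x) in H1.
  have H2 : \sum_(0 <= i < L) sK i x <= L%:R.
    have E1 : \sum_(0 <= i < L) (1 : R) = L%:R by rewrite sumr_const_nat subn0.
    by rewrite -E1; apply: ler_sum => i _; exact: sK_le1.
  have H3 := HL x xK.
  have Ld : 0 <= L%:R / d by rewrite divr_ge0 // ?ler0n // ltW.
  apply: le_trans (lerD H2 H1) _.
  apply: le_trans (lerD (lexx _) (ler_wpM2l Ld H3)) _.
  rewrite mulrBr mulr1 mulfVK ?gt_eqF //; lra.
move=> N x; apply: le_trans (Hk N x); apply: Sg_mono.
by rewrite leq_pmulr.
Qed.

Lemma killed_le_sK n x y : y \in K -> killed_prob adj K R n x y <= sK n x.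
Proof.
move=> yK; rewrite killedE; apply: iterPk_le => z; rewrite /one.
by case: eqP => [->|_]; rewrite ?yK // ler0n.
Qed.

Lemma killed_ge0 n x y : 0 <= killed_prob adj K R n x y.
Proof. by rewrite killedE; apply: iterPk_ge0 => z; rewrite ler0n. Qed.

Lemma killed_off n x y : y \in K -> x \notin K -> killed_prob adj K R n x y = 0.
Proof.
move=> yK xK; case: n => [|n] /=; last by rewrite (negbTE xK).
by case: eqP => // xy; rewrite xy yK in xK.
Qed.

End Green.


Section Green2.
Variables (R : realType) (V : eqType) (adj : V -> seq V) (K : seq V).

Lemma greenK_ge0 x y : (0 <= greenK adj K R x y)%E.
Proof. by apply: nneseries_ge0 => n _ _; rewrite lee_fin killed_ge0. Qed.

Lemma greenK_le (B : R) x y : y \in K -> (forall N x, Sg R V adj K N x <= B) ->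
  (greenK adj K R x y <= B%:E)%E.
Proof.
move=> yK HB; rewrite /greenK; apply: lime_le.
  by apply: is_cvg_nneseries => n _ _; rewrite lee_fin killed_ge0.
apply: nearW => N; rewrite sumEFin lee_fin; apply: le_trans (HB N x).
by apply: ler_sum => n _; exact: killed_le_sK.
Qed.

Lemma greenK_harm x y : x \in K ->
  greenK adj K R x y = (((x == y)%:R)%:E +
     ((deg adj x)%:R^-1)%:E * \sum_(u <- adj x) greenK adj K R u y)%E.
Proof.
move=> xK; rewrite /greenK.
rewrite (@nneseries_recl R xpredT); last by []; last first.
  by move=> k _; rewrite lee_fin killed_ge0.
congr (_ + _)%E.
rewrite -(@nneseries_addn R (fun n => (killed_prob adj K R n x y)%:E) 1); last first.
  by move=> i; rewrite lee_fin killed_ge0.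
rewrite -nneseries_sum; last by move=> u j _; rewrite lee_fin killed_ge0.
rewrite -nneseriesZl; last first.
  by move=> i _; apply: sume_ge0 => u _; rewrite lee_fin killed_ge0.
apply: congr_lim; apply: funext => N; apply: eq_bigr => n _.
by rewrite addn1 /= xK sumEFin EFinM.
Qed.
End Green2.


Section Step.
Variables (R : realType) (V : eqType) (adj : V -> seq V) (K : seq V).
Hypothesis nadj : forall v, v \notin adj v.

Definition wt (st : pstate V) z : nat := (minn (st.1.1 z) (st.1.2 z) + st.2 z)%N.
Definition Phi (f : V -> R) st := \sum_(x <- undup K) (wt st x)%:R * f x.

Lemma sum_pick (r : seq V) (g : V -> R) a : uniq r ->
  \sum_(x <- r) (x == a)%:R * g x = (a \in r)%:R * g a.
Proof.
elim: r => [|c r IH] /=; first by rewrite big_nil mul0r.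
case/andP=> cr ur; rewrite big_cons IH // in_cons.
case: (c =P a) => [<-|ca]; first by rewrite eqxx (negbTE cr) mul0r addr0.
by rewrite mul0r add0r; case: (a =P c) => // ac; case: ca.
Qed.

Lemma sum_pickK (g : V -> R) a : (forall z, z \notin K -> g z = 0) ->
  \sum_(x <- undup K) (x == a)%:R * g x = g a.
Proof.
move=> g0; rewrite sum_pick ?undup_uniq // mem_undup.
by case aK: (a \in K); rewrite ?mul1r // mul0r g0 ?aK.
Qed.

Lemma pw_pair (f : V -> R) eo ew eg b u w z :
  (forall z, z \notin K -> f z = 0) ->
  (0 < eo b)%N -> (0 < ew b)%N -> u \in adj b -> w \in adj b ->
  (wt (apply_step K (eo, ew, eg) (PStep b u w)) z)%:R * f z =
  (wt (eo, ew, eg) z)%:R * f z +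
  (- (z == b)%:R + (z == u)%:R * (eo u < ew u)%:R +
     (z == w)%:R * (ew w <= eo w)%:R) * f z.
Proof.
move=> f0 eob ewb ub wb.
case zK: (z \in K); last by rewrite f0 ?zK // !mulr0 addr0.
have ubn : u != b by apply/eqP => E; move: (nadj b); rewrite -{1}E ub.
have wbn : w != b by apply/eqP => E; move: (nadj b); rewrite -{1}E wb.
have bu : (b == u) = false by rewrite eq_sym (negbTE ubn).
have bw : (b == w) = false by rewrite eq_sym (negbTE wbn).
rewrite /wt /= /upd !eqxx ?(negbTE ubn) ?(negbTE wbn).
case: (z =P b) => [->|/eqP zb].
  rewrite bu bw /=.
  have -> : ((if [&& w \in K, eo w == ew w & (ew w).+1 == (if w == u then (eo w).+1 else eo w).+1]
    then fun x : V => if x == w then (eg x).+1 else eg x else eg) b) = eg b.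
    by case: ifP; rewrite ?bw.
  have -> : (minn (eo b) (ew b) + eg b = (minn (eo b).-1 (ew b).-1 + eg b) + 1)%N by lia.
  rewrite natrD /=; ring.
rewrite ?(negbTE zb) /= -mulrDl; congr (_ * _).
rewrite oppr0 add0r -!natrM -!natrD; congr (_%:R).
case: (z =P w) => [E|/eqP zw].
  subst z; rewrite zK ?eqxx /=.
  case: (w =P u) => [E|/eqP wu].
    subst u; rewrite ?eqxx /=; case: ifP => Hc /=; rewrite ?eqxx /=; lia.
 
  case: ifP => Hc /=; rewrite ?eqxx /=; lia.
have zw' : (z == w) = false by apply: negbTE.
have Eg : forall c, (if c then (fun x : V => if x == w then (eg x).+1 else eg x) else eg) z = eg z.
  by case => //=; rewrite zw'.
rewrite Eg ?zw' /=.
case: ifP => [/eqP E|Hzu]; first by subst u; rewrite ?eqxx /=; lia.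
rewrite ?Hzu /=; lia.
Qed.

Lemma pw_ghost (f : V -> R) eo ew eg a v z :
  (forall z, z \notin K -> f z = 0) ->
  (0 < eg a)%N -> v \in adj a ->
  (wt (apply_step K (eo, ew, eg) (GStep a v)) z)%:R * f z =
  (wt (eo, ew, eg) z)%:R * f z + (- (z == a)%:R + (z == v)%:R) * f z.
Proof.
move=> f0 ega va.
have van : v != a by apply/eqP => E; move: (nadj a); rewrite -{1}E va.
rewrite /wt /= /upd -mulrDl; congr (_ * _).
case: (z =P a) => [E|/eqP za].
  have av : (a == v) = false by rewrite eq_sym; apply: negbTE.
  subst z; rewrite /= av.
  have -> : (minn (eo a) (ew a) + eg a = (minn (eo a) (ew a) + (eg a).-1) + 1)%N by lia.
  rewrite natrD /=; ring.
case: (z =P v) => [E|/eqP zv].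
  subst z; rewrite /=.
  rewrite -addn1 addnA natrD /=; ring.
by rewrite /= !mulr0n oppr0 !addr0.
Qed.

Lemma Phi_pair (f : V -> R) eo ew eg b u w :
  (forall z, z \notin K -> f z = 0) ->
  (0 < eo b)%N -> (0 < ew b)%N -> b \in K -> u \in adj b -> w \in adj b ->
  Phi f (apply_step K (eo, ew, eg) (PStep b u w)) =
  Phi f (eo, ew, eg) + (- f b + (eo u < ew u)%:R * f u + (ew w <= eo w)%:R * f w).
Proof.
move=> f0 eob ewb bK ub wb.
rewrite /Phi (eq_bigr _ (fun z _ => @pw_pair f eo ew eg b u w z f0 eob ewb ub wb)) big_split /=.
congr (_ + _).
rewrite (eq_bigr (fun z => - ((z == b)%:R * f z) + (z == u)%:R * ((eo u < ew u)%:R * f z)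
   + (z == w)%:R * ((ew w <= eo w)%:R * f z))); last first.
  by move=> z _; rewrite !mulrDl mulNr !mulrA.
rewrite !big_split /= sumrN !sum_pickK //.
- by move=> z zK; rewrite f0 // mulr0.
- by move=> z zK; rewrite f0 // mulr0.
Qed.

Lemma Phi_ghost (f : V -> R) eo ew eg a v :
  (forall z, z \notin K -> f z = 0) ->
  (0 < eg a)%N -> a \in K -> v \in adj a ->
  Phi f (apply_step K (eo, ew, eg) (GStep a v)) =
  Phi f (eo, ew, eg) + (- f a + f v).
Proof.
move=> f0 ega aK va.
rewrite /Phi (eq_bigr _ (fun z _ => @pw_ghost f eo ew eg a v z f0 ega va)) big_split /=.
congr (_ + _).
rewrite (eq_bigr (fun z => - ((z == a)%:R * f z) + (z == v)%:R * f z)); last first.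
  by move=> z _; rewrite !mulrDl mulNr.
by rewrite big_split /= sumrN !sum_pickK.
Qed.
End Step.


Section Avg.
Variables (R : realType) (V : eqType) (adj : V -> seq V) (K : seq V).
Hypothesis nadj : forall v, v \notin adj v.
Hypothesis degpos : forall v, (0 < deg adj v)%N.

Definition Dlt (f : V -> R) (st : pstate V) (s : gpstep V) : R :=
  match s with
  | GStep a v => - f a + f v
  | PStep b u w => - f b + (st.1.1 u < st.1.2 u)%:R * f u + (st.1.2 w <= st.1.1 w)%:R * f w
  end.

Lemma sum_const_seq (r : seq V) (c : R) : \sum_(x <- r) c = (size r)%:R * c.
Proof.
elim: r => [|a r IH]; first by rewrite big_nil mul0r.
by rewrite big_cons IH /= -addn1 natrD mulrDl mul1r addrC.
Qed.

Lemma double_sum (r : seq V) (A : R) (B C : V -> R) :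
  \sum_(u <- r) \sum_(w <- r) (A + B u + C w) =
  (size r)%:R * (size r)%:R * A + (size r)%:R * \sum_(u <- r) B u
  + (size r)%:R * \sum_(u <- r) C u.
Proof.
rewrite (eq_bigr (fun u => (size r)%:R * (A + B u) + \sum_(w <- r) C w)); last first.
  by move=> u _; rewrite (big_split _ _ _ (fun=> A + B u) C) /= sum_const_seq.
rewrite big_split /= sum_const_seq -mulr_sumr big_split /= sum_const_seq.
ring.
Qed.

Lemma avg_gen (H : R -> R) (f : V -> R) st c :
  (forall z, z \notin K -> f z = 0) -> valid_choice K st c ->
  \sum_(s <- options adj c) step_weight adj R s * H (Phi R V K f (apply_step K st s)) =
  \sum_(s <- options adj c) step_weight adj R s * H (Phi R V K f st + Dlt f st s).
Proof.
move=> f0; case: st => [[eo ew] eg]; case: c => [a|b] /=.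
  case/andP=> aK ega; rewrite !big_map big_seq [RHS]big_seq.
  by apply: eq_bigr => v va; rewrite (@Phi_ghost R V adj K nadj).
case/and3P=> bK eob ewb; rewrite !big_allpairs_dep big_seq [RHS]big_seq.
apply: eq_bigr => u ub; rewrite big_seq [RHS]big_seq.
by apply: eq_bigr => w wb; rewrite (@Phi_pair R V adj K nadj).
Qed.

Lemma wsum st c : valid_choice K st c ->
  \sum_(s <- options adj c) step_weight adj R s = 1.
Proof.
have dp v : (deg adj v)%:R != 0 :> R by rewrite pnatr_eq0 -lt0n degpos.
case: st => [[eo ew] eg]; case: c => [a|b] /= _.
  by rewrite big_map sum_const_seq -/(deg adj a) mulfV.
rewrite big_allpairs_dep /=.
rewrite (eq_bigr (fun u => (deg adj b)%:R * ((deg adj b)%:R ^+ 2)^-1)); last first.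
  by move=> u _; rewrite sum_const_seq.
rewrite sum_const_seq -/(deg adj b) mulrA -expr2 mulfV //; exact: expf_neq0 (dp b).
Qed.

Lemma Dsum f st c : valid_choice K st c ->
  \sum_(s <- options adj c) step_weight adj R s * Dlt f st s =
  - f (origin c) + (deg adj (origin c))%:R^-1 * \sum_(u <- adj (origin c)) f u.
Proof.
have dp v : (deg adj v)%:R != 0 :> R by rewrite pnatr_eq0 -lt0n degpos.
case: st => [[eo ew] eg]; case: c => [a|b] /= _.
  rewrite big_map /= (eq_bigr (fun v => (deg adj a)%:R^-1 * - f a + (deg adj a)%:R^-1 * f v)).
    by rewrite big_split /= sum_const_seq -mulr_sumr -/(deg adj a) mulrA mulfV // mul1r.
  by move=> v _; rewrite mulrDr.
rewrite big_allpairs_dep /=.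
rewrite (eq_bigr (fun u => ((deg adj b)%:R ^+ 2)^-1 * \sum_(w <- adj b)
    (- f b + (eo u < ew u)%:R * f u + (ew w <= eo w)%:R * f w))); last first.
  by move=> u _; rewrite mulr_sumr.
rewrite -mulr_sumr double_sum -/(deg adj b).
have -> : \sum_(u <- adj b) (ew u <= eo u)%:R * f u =
          \sum_(u <- adj b) f u - \sum_(u <- adj b) (eo u < ew u)%:R * f u.
  rewrite -sumrB; apply: eq_bigr => u _.
  by case: ltnP => _ /=; rewrite ?mul1r ?mul0r ?subr0 ?subrr.
set d := (deg adj b)%:R; have := dp b; rewrite -/d => dn0.
field; exact: dn0.
Qed.

Lemma Dlt_bound f st s (M : R) : (forall z, 0 <= f z <= M) ->
  Dlt f st s ^+ 2 <= 4 * M ^+ 2.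
Proof.
move=> fM.
have [M0 H] : 0 <= M /\ - M <= Dlt f st s <= 2 * M.
  case: s => [a v|b u w] /=.
    have := fM a; have := fM v; case/andP => ? ?; case/andP => ? ?.
    split; [lra | apply/andP; split; lra].
  have := fM b; have := fM u; have := fM w.
  case/andP => ? ?; case/andP => ? ?; case/andP => ? ?.
  case: (_ < _)%N; case: (_ <= _)%N; rewrite /= ?mul1r ?mul0r;
  (split; [lra | apply/andP; split; lra]).
case/andP: H => H1 H2.
nra.
Qed.
End Avg.


Lemma big_all (T : Type) (R : realType) (l : seq T) (P Q : pred T) (F G : T -> R) :
  all P l -> (forall h, P h -> Q h -> F h = G h) ->
  \sum_(h <- l | Q h) F h = \sum_(h <- l | Q h) G h.
Proof.
move=> al FG; elim: l al => [|a l IH] /=; first by rewrite !big_nil.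
case/andP=> Pa al; rewrite !big_cons IH //.
by case Qa: (Q a) => //; rewrite FG.
Qed.

Lemma big_all_le (T : Type) (R : realType) (l : seq T) (P Q : pred T) (F G : T -> R) :
  all P l -> (forall h, P h -> Q h -> F h <= G h) ->
  \sum_(h <- l | Q h) F h <= \sum_(h <- l | Q h) G h.
Proof.
move=> al FG; elim: l al => [|a l IH] /=; first by rewrite !big_nil.
case/andP=> Pa al; rewrite !big_cons.
by case Qa: (Q a) => //; [apply: lerD; [exact: FG | exact: IH] | exact: IH].
Qed.

Section Proc.
Variables (R : realType) (V : eqType) (adj : V -> seq V) (K : seq V).
Variables (so sw : V -> nat) (strat : seq (gpstep V) -> gpchoice V).
Hypothesis nadj : forall v, v \notin adj v.
Hypothesis degpos : forall v, (0 < deg adj v)%N.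
Hypothesis Hstrat : valid_strategy adj K so sw strat.

Local Notation hist := (hist adj K so sw strat).
Local Notation st := (state_of K so sw).
Local Notation hp := (hist_prob adj R).
Local Notation PhiK := (Phi R V K).

Definition Ex n (F : pstate V -> R) := \sum_(h <- hist n) hp h * F (st h).
Definition Pn n := \sum_(h <- hist n | ~~ terminal K (st h)) hp h.

Lemma step_weight_ge0 s : 0 <= step_weight adj R s.
Proof.
by case: s => [a v|b u w] /=; rewrite invr_ge0 ?ler0n //.
Qed.

Lemma hp_ge0 h : 0 <= hp h.
Proof. by rewrite /hist_prob; apply: prodr_ge0 => s _; exact: step_weight_ge0. Qed.

Lemma Ex_step n F : Ex n.+1 F =
  \sum_(h <- hist n | ~~ terminal K (st h)) hp h *
     \sum_(s <- options adj (strat h)) step_weight adj R s * F (apply_step K (st h) s).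
Proof.
rewrite /Ex /= big_flatten /= big_map big_filter; apply: eq_bigr => h _.
rewrite big_map mulr_sumr; apply: eq_bigr => s _.
by rewrite /hist_prob big_cons /= mulrCA mulrA.
Qed.

Lemma Phi_term f s : terminal K s -> PhiK f s = 0.
Proof.
case: s => [[eo ew] eg] /= /allP Ht; rewrite /Phi big_seq big1 // => x.
rewrite mem_undup => /Ht /andP [/eqP m0 /eqP g0].
by rewrite /wt /= m0 g0 mul0r.
Qed.

Lemma Phi_ge0 f s : (forall x, 0 <= f x) -> 0 <= PhiK f s.
Proof. by move=> f0; apply: sumr_ge0 => x _; rewrite mulr_ge0 ?ler0n. Qed.

Lemma Phi_mono f g s : (forall x, f x <= g x) -> PhiK f s <= PhiK g s.
Proof. by move=> fg; apply: ler_sum => x _; rewrite ler_wpM2l ?ler0n. Qed.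

Lemma Phi_ge1 f s : ~~ terminal K s -> (forall x, x \in K -> 1 <= f x) ->
  (forall x, 0 <= f x) -> 1 <= PhiK f s.
Proof.
case: s => [[eo ew] eg] /= /allPn [x xK Hx] f1 f0.
rewrite /Phi (bigD1_seq x) ?mem_undup ?undup_uniq //=.
have w1 : (1 <= wt V (eo, ew, eg) x)%N.
  rewrite /wt /=; move: Hx; rewrite negb_and !eqn0Ngt !negbK; case/orP => H; lia.
apply: le_trans (_ : (wt V (eo, ew, eg) x)%:R * f x <= _).
  have w1r : (1 : R) <= (wt V (eo, ew, eg) x)%:R by rewrite ler1n.
  have := f1 x xK; have := f0 x; nra.
rewrite lerDl; apply: sumr_ge0 => z _; rewrite mulr_ge0 ?ler0n //.
Qed.

Lemma Ex_nonterm n F : (forall s, terminal K s -> F s = 0) ->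
  Ex n F = \sum_(h <- hist n | ~~ terminal K (st h)) hp h * F (st h).
Proof.
move=> F0; rewrite /Ex [RHS]big_mkcond; apply: eq_bigr => h _.
by case: ifP => // /negbFE /F0 ->; rewrite mulr0.
Qed.

Definition Pv h := terminal K (st h) || valid_choice K (st h) (strat h).

Lemma origin_K s c : valid_choice K s c -> origin c \in K.
Proof. by case: s => [[eo ew] eg]; case: c => [a|b] /=; [case/andP | case/and3P]. Qed.

Lemma Ex_harm n f (r : V -> R) :
  (forall z, z \notin K -> f z = 0) ->
  (forall b, b \in K -> f b = r b + (deg adj b)%:R^-1 * \sum_(u <- adj b) f u) ->
  Ex n.+1 (PhiK f) = Ex n (PhiK f) -
     \sum_(h <- hist n | ~~ terminal K (st h)) hp h * r (origin (strat h)).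
Proof.
move=> f0 fh; rewrite Ex_step (@Ex_nonterm n (PhiK f) (@Phi_term f)) -sumrB.
apply: (@big_all _ _ _ Pv _ _ _ (Hstrat n)) => h /orP [->//|vc] _.
rewrite (@avg_gen R V adj K nadj id f _ _ f0 vc) /=.
rewrite (eq_bigr (fun s => step_weight adj R s * PhiK f (st h) +
    step_weight adj R s * Dlt R V f (st h) s)); last by move=> s _; rewrite mulrDr.
rewrite big_split /= -mulr_suml (@wsum R V adj K degpos _ _ vc) mul1r (@Dsum R V adj K degpos f _ _ vc).
rewrite (fh _ (origin_K _ _ vc)); ring.
Qed.

Lemma Ex_sq n f (M : R) :
  (forall z, z \notin K -> f z = 0) ->
  (forall b, b \in K -> f b = 1 + (deg adj b)%:R^-1 * \sum_(u <- adj b) f u) ->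
  (forall z, 0 <= f z <= M) ->
  Ex n.+1 (fun s => PhiK f s ^+ 2) <=
  Ex n (fun s => PhiK f s ^+ 2) - 2 * Ex n (PhiK f) + 4 * M ^+ 2 * Pn n.
Proof.
move=> f0 fh fM.
rewrite Ex_step (@Ex_nonterm n (PhiK f) (@Phi_term f)).
rewrite (@Ex_nonterm n (fun s => PhiK f s ^+ 2)); last by move=> s /(Phi_term f) ->; rewrite expr0n.
rewrite /Pn mulr_sumr mulr_sumr -sumrB -big_split /=.
apply: (@big_all_le _ _ _ Pv _ _ _ (Hstrat n)) => h /orP [->//|vc] _.
rewrite (@avg_gen R V adj K nadj (fun x => x ^+ 2) f _ _ f0 vc) /=.
set P0 := PhiK f (st h).
rewrite (eq_bigr (fun s => step_weight adj R s * P0 ^+ 2 +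
    2 * P0 * (step_weight adj R s * Dlt R V f (st h) s) +
    step_weight adj R s * Dlt R V f (st h) s ^+ 2)); last by move=> s _; ring.
rewrite !big_split /= -mulr_suml -mulr_sumr (@wsum R V adj K degpos _ _ vc) mul1r (@Dsum R V adj K degpos f _ _ vc).
rewrite (fh (origin (strat h)) (origin_K _ _ vc)).
have HD : \sum_(s <- options adj (strat h)) step_weight adj R s * Dlt R V f (st h) s ^+ 2
    <= 4 * M ^+ 2.
  apply: le_trans (_ : _ <= \sum_(s <- options adj (strat h)) step_weight adj R s * (4 * M ^+ 2)) _.
    apply: ler_sum => s _; apply: ler_wpM2l; [exact: step_weight_ge0 | exact: Dlt_bound].
  by rewrite -mulr_suml (@wsum R V adj K degpos _ _ vc) mul1r.
have hp0 := hp_ge0 h.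
have H := ler_wpM2l hp0 HD.
lra.
Qed.
End Proc.


Theorem lemma3p3 (R : realType) (V : eqType) (adj : V -> seq V)
  (Hsimple : graph_simple adj) (Hconn : graph_connected adj)
  (Hinf : graph_infinite V) (Htrans : vertex_transitive adj)
  (K : seq V) (y : V) (Hy : y \in K)
  (so sw : V -> nat) (Hunst : exists x : V, (0 < minn (so x) (sw x))%N)
  (strat : seq (gpstep V) -> gpchoice V)
  (Hstrat : valid_strategy adj K so sw strat) :
  expected_jumps_from adj K so sw strat R y =
  (\sum_(x <- undup K)
     ((minn (so x) (sw x))%:R)%:E * greenK adj K R x y)%E.
Proof.
have nadj : forall v, v \notin adj v by case: Hsimple => _ [].
have degpos : forall v, (0 < deg adj v)%N.
  move=> v; have [u uv] := exists_out V Hinf [:: v].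
  have [p [pth lst]] := Hconn v u.
  case: p pth lst => [|a p] /=.
    by move=> _ E; rewrite E mem_seq1 eqxx in uv.
  by case/andP => av _ _; rewrite /deg; case: (adj v) av.
have [L [d [d0 L0 HL]]] := uniform_exit R V adj K Hconn Hinf K.
have HB := Sg_bound R V adj K L d d0 L0 HL.
have fin : forall x z, z \in K -> greenK adj K R x z = (fine (greenK adj K R x z))%:E.
  move=> x z zK; apply/esym/fineK; rewrite ge0_fin_numE ?greenK_ge0 //.
  by apply: le_lt_trans (greenK_le R V adj K _ x z zK HB) _; rewrite ltey.
set G := fun x z => fine (greenK adj K R x z).
have Gh : forall x z, z \in K -> x \in K ->
    G x z = (x == z)%:R + (deg adj x)%:R^-1 * \sum_(u <- adj x) G u z.
  move=> x z zK xK; apply: EFin_inj; rewrite -(fin x z zK) greenK_harm //.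
  rewrite EFinD EFinM -sumEFin; congr (_ + _ * _)%E.
  by apply: eq_bigr => u _; exact: fin.
have G0 : forall x z, z \in K -> x \notin K -> G x z = 0.
  move=> x z zK xK; rewrite /G /greenK eseries0 // => i _ _.
  by rewrite killed_off.
have Gge0 : forall x z, 0 <= G x z by move=> x z; apply: fine_ge0; exact: greenK_ge0.
have Gxx : forall x, x \in K -> 1 <= G x x.
  move=> x xK; rewrite Gh // eqxx lerDl; apply: mulr_ge0; first by rewrite invr_ge0.
  by apply: sumr_ge0 => u _; exact: Gge0.
set g1 := fun x => \sum_(z <- undup K) G x z.
have g1ge0 : forall x, 0 <= g1 x by move=> x; apply: sumr_ge0 => z _; exact: Gge0.
have g1off : forall x, x \notin K -> g1 x = 0.
  move=> x xK; apply: big1_seq => z; rewrite mem_undup => /andP [_ zK]; exact: G0.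
have g1h : forall b, b \in K -> g1 b = 1 + (deg adj b)%:R^-1 * \sum_(u <- adj b) g1 u.
  move=> b bK; rewrite /g1.
  rewrite (eq_big_seq (fun z => (z == b)%:R * 1 + (deg adj b)%:R^-1 * \sum_(u <- adj b) G u z)); last first.
    by move=> z; rewrite mem_undup => zK; rewrite Gh // eq_sym mulr1.
  rewrite big_split /= sum_pick ?undup_uniq // mem_undup bK mulr1; congr (_ + _).
  rewrite -mulr_sumr; congr (_ * _); exact: exchange_big.
have g1ge1 : forall x, x \in K -> 1 <= g1 x.
  move=> x xK; rewrite /g1 (bigD1_seq x) ?mem_undup ?undup_uniq //=.
  apply: le_trans (Gxx x xK) _; rewrite lerDl; apply: sumr_ge0 => z _; exact: Gge0.
set M := \sum_(x <- undup K) g1 x.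
have g1M : forall z, 0 <= g1 z <= M.
  move=> z; rewrite g1ge0 /=; case zK: (z \in K); last first.
    by rewrite g1off ?zK //; apply: sumr_ge0 => *; exact: g1ge0.
  rewrite /M (bigD1_seq z) ?mem_undup ?undup_uniq //= lerDl; apply: sumr_ge0 => *; exact: g1ge0.
have Gyg1 : forall x, G x y <= g1 x.
  move=> x; rewrite /g1 (bigD1_seq y) ?mem_undup ?undup_uniq //= lerDl.
  by apply: sumr_ge0 => *; exact: Gge0.
set C := 4 * M ^+ 2.
have C0 : 0 <= C by rewrite /C mulr_ge0 // exprn_ge0 // (le_trans _ (andP (g1M y)).2) ?g1ge0.
set A := fun n => Ex R V adj K so sw strat n (Phi R V K g1).
set Bq := fun n => Ex R V adj K so sw strat n (fun s => Phi R V K g1 s ^+ 2).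
set P := fun n => Pn R V adj K so sw strat n.
have Astep : forall n, A n.+1 = A n - P n.
  move=> n; rewrite /A (Ex_harm R V adj K so sw strat nadj degpos Hstrat n g1 (fun _ => 1)) //.
  by rewrite /P /Pn; under eq_bigr do rewrite mulr1.
have Bstep : forall n, Bq n.+1 <= Bq n - 2 * A n + C * P n.
  move=> n; exact: (Ex_sq R V adj K so sw strat nadj degpos Hstrat n g1 M g1off g1h g1M).
have PA : forall n, P n <= A n.
  move=> n; rewrite /A (Ex_nonterm R V adj K so sw strat n _ (Phi_term R V K g1)).
  apply: ler_sum => h nt; rewrite -[X in X <= _]mulr1; apply: ler_wpM2l; first exact: hp_ge0.
  by apply: Phi_ge1 => //.
have P0 : forall n, 0 <= P n by move=> n; apply: sumr_ge0 => h _; exact: hp_ge0.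
have A0 : forall n, 0 <= A n.
  by move=> n; apply: sumr_ge0 => h _; apply: mulr_ge0; [exact: hp_ge0 | exact: Phi_ge0].
have B0 : forall n, 0 <= Bq n.
  by move=> n; apply: sumr_ge0 => h _; apply: mulr_ge0; [exact: hp_ge0 | exact: sqr_ge0].
have Zstep : forall n, Bq n.+1 + C * A n.+1 <= Bq n + C * A n - 2 * A n.
  move=> n; have := Bstep n; rewrite Astep mulrBr; lra.
have Zsum : forall N, 2 * \sum_(0 <= n < N) A n <= Bq 0 + C * A 0 - (Bq N + C * A N).
  elim=> [|N IH]; first by rewrite big_geq // mulr0 subrr.
  rewrite big_nat_recr //= mulrDr; have := Zstep N; lra.
have Amono : forall n m, (n <= m)%N -> A m <= A n.
  move=> n m /subnK <-; elim: (m - n)%N => [|k IH] //.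
  by rewrite addSn Astep; have := P0 (k + n)%N; lra.
have ABound : forall N, N%:R * A N <= (Bq 0 + C * A 0) / 2.
  move=> N; have H1 : N%:R * A N <= \sum_(0 <= n < N) A n.
    have -> : N%:R * A N = \sum_(0 <= n < N) A N by rewrite sumr_const_nat subn0 mulr_natl.
    apply: ler_sum_nat => n /andP [_ nN]; apply: Amono; exact: ltnW.
  have := Zsum N; have := B0 N; have := mulr_ge0 C0 (A0 N); lra.
set Gy := fun x => G x y.
set Ey := fun n => Ex R V adj K so sw strat n (Phi R V K Gy).
set a := fun n => \sum_(h <- hist adj K so sw strat n |
    ~~ terminal K (state_of K so sw h) && (origin (strat h) == y)) hist_prob adj R h.
have Eystep : forall n, Ey n.+1 = Ey n - a n.
  move=> n; rewrite /Ey (Ex_harm R V adj K so sw strat nadj degpos Hstrat n Gy (fun b => (b == y)%:R)).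
  - congr (_ - _); rewrite /a big_mkcondr /=; apply: eq_bigr => h _.
    by case: (_ == y); rewrite ?mulr1 ?mulr0.
  - by move=> z zK; exact: G0.
  - by move=> b bK; exact: Gh.
have Ssum : forall N, \sum_(0 <= n < N) a n = Ey 0 - Ey N.
  elim => [|N IH]; first by rewrite big_geq // subrr.
  by rewrite big_nat_recr //= IH Eystep; lra.
have Ey0 : forall N, 0 <= Ey N.
  by move=> n; apply: sumr_ge0 => h _; apply: mulr_ge0; [exact: hp_ge0 | apply: Phi_ge0 => x; exact: Gge0].
have EyA : forall N, Ey N <= A N.
  move=> n; apply: ler_sum => h _; apply: ler_wpM2l; first exact: hp_ge0.
  exact: Phi_mono.
have Einit : Ey 0 = \sum_(x <- undup K) (minn (so x) (sw x))%:R * G x y.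
  rewrite /Ey /Ex /= big_cons big_nil /hist_prob big_nil mul1r addr0.
  by apply: eq_bigr => x _; rewrite /wt /= addn0.
have LHS : expected_jumps_from adj K so sw strat R y =
    limn (EFin \o (fun N => \sum_(0 <= n < N) a n)).
  rewrite /expected_jumps_from; congr (limn _); apply: funext => N /=.
  by rewrite sumEFin.
have cv : ((fun N => \sum_(0 <= n < N) a n) @ \oo --> Ey 0)%classic.
  apply/cvgrPdist_le => e e0.
  set Z := (Bq 0 + C * A 0) / 2.
  have Z0 : 0 <= Z by rewrite /Z divr_ge0 // addr_ge0 // mulr_ge0.
  have [k Hk] : exists k : nat, Z / e < k%:R.
    by exists (Num.Def.archi_bound (Z / e)); apply: archi_boundP; rewrite divr_ge0 // ltW.
  exists k.+1 => // N /= kN.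
  rewrite Ssum (_ : Ey 0 - (Ey 0 - Ey N) = Ey N); last by ring.
  rewrite ger0_norm //.
  have HN : Z < N%:R * e.
    rewrite -ltr_pdivrMr //; apply: lt_le_trans Hk _; rewrite ler_nat; exact: ltnW.
  have H1 : N%:R * A N <= Z by exact: ABound.
  have Npos : (0 : R) < N%:R by rewrite ltr0n (leq_trans _ kN).
  have : N%:R * A N < N%:R * e by exact: le_lt_trans H1 HN.
  rewrite ltr_pM2l // => /ltW; exact: le_trans (EyA N).
have cS : cvgn (fun N => \sum_(0 <= n < N) a n) by apply/cvg_ex; exists (Ey 0).
rewrite LHS (EFin_lim cS) (cvg_lim _ cv) // Einit.
rewrite -sumEFin; apply: eq_bigr => x xK.
by rewrite (fin x y Hy) EFinM.
Qed.
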